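(* Let $G$ be a connected graph with a list-assignment $L$ such that $|L(u)|\ge\deg(u)+1$ for all $u\in V(G)$. If there exist $v,w\in V(G)$ such that $vw\in E(G)$, $L(v)\not\subseteq L(w)$, and $G-v$ is connected, then $\alpha\sim\beta$ whenever $\alpha$ and $\beta$ are both unfrozen $L$-colourings.
   Context: An $L$-colouring is a proper colouring $\varphi$ with $\varphi(v)\in L(v)$ for all $v$. A vertex $u$ is frozen under $\varphi$ if every colour of $L(u)\setminus\{\varphi(u)\}$ appears on a neighbour of $u$; a colouring is unfrozen if at least one vertex is not frozen. $\alpha\sim\beta$ means $\alpha$ can be transformed into $\beta$ by a sequence of single-vertex recolouring steps, each keeping the colouring a proper $L$-colouring. *)

(* Defs.v *)
From Stdlib Require Import Relations.
From mathcomp Require Import all_boot.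
Set Implicit Arguments. Unset Strict Implicit. Unset Printing Implicit Defensive.

(* Colours range over a finite type C (only finitely many colours occur in
   the lists of a finite graph). *)

Definition simple_graph (T : finType) (e : rel T) : Prop :=
  symmetric e /\ irreflexive e.

Definition deg (T : finType) (e : rel T) (u : T) : nat := #|[set x | e u x]|.

Definition connected_graph (T : finType) (e : rel T) : Prop :=
  forall x y : T, connect e x y.

Definition connected_minus (T : finType) (e : rel T) (v : T) : Prop :=
  forall x y : T, x != v -> y != v ->
    connect [rel a b | [&& e a b, a != v & b != v]] x y.

Definition Lcolouring (T C : finType) (e : rel T) (L : T -> {set C})
  (phi : T -> C) : Prop :=
  (forall u, phi u \in L u) /\ (forall u x, e u x -> phi u != phi x).

Definition frozen (T C : finType) (e : rel T) (L : T -> {set C})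
  (phi : T -> C) (u : T) : Prop :=
  forall c, c \in L u -> c != phi u -> exists x, e u x /\ phi x = c.

Definition unfrozen (T C : finType) (e : rel T) (L : T -> {set C})
  (phi : T -> C) : Prop :=
  exists u, ~ frozen e L phi u.

Definition recolour_step (T C : finType) (e : rel T) (L : T -> {set C})
  (a b : T -> C) : Prop :=
  Lcolouring e L a /\ Lcolouring e L b /\
  exists u, forall x, x != u -> a x = b x.

Definition reconf (T C : finType) (e : rel T) (L : T -> {set C}) :
  relation (T -> C) :=
  clos_refl_trans (T -> C) (recolour_step e L).

(* Main.v *)
Require Import Defs.
From Stdlib Require Import Relations Classical.
From mathcomp Require Import all_boot zify.
Set Implicit Arguments. Unset Strict Implicit. Unset Printing Implicit Defensive.

Section HP.
Variables (T : finType) (R : rel T) (r : T).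
Hypothesis Rsym : symmetric R.

Definition Pn x n := [exists t : n.-tuple T, path R r t && (last r t == x)].
Definition Pn' x n := Pn x n || ~~ connect R r x.

Lemma Pn_seq x s : path R r s -> last r s = x -> Pn x (size s).
Proof.
move=> ps ls; apply/existsP; exists (in_tuple s) => /=; by rewrite ps ls eqxx.
Qed.

Lemma Pn_inv x n : Pn x n -> exists s, [/\ path R r s, last r s = x & size s = n].
Proof.
case/existsP=> t /andP[ps /eqP ls]; exists (val t); split=> //; exact: size_tuple.
Qed.

Lemma exPn' x : exists n, Pn' x n.
Proof.
case: (boolP (connect R r x)) => H; last by exists 0; rewrite /Pn' H orbT.
case/connectP: H => s ps ls; exists (size s); rewrite /Pn' (Pn_seq ps (esym ls)) //.
Qed.

Definition hfun x := ex_minn (exPn' x).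

Lemma hfun_min x s : path R r s -> last r s = x -> hfun x <= size s.
Proof.
move=> ps ls; rewrite /hfun; case: ex_minnP => m _ H; apply: H.
by rewrite /Pn' (Pn_seq ps ls).
Qed.

Lemma hfun_path x : connect R r x -> exists s, [/\ path R r s, last r s = x & size s = hfun x].
Proof.
move=> cx; rewrite /hfun; case: ex_minnP => m; rewrite /Pn' cx orbF => /Pn_inv ? _.
done.
Qed.

Definition pfun x := odflt r [pick y | [&& R x y, connect R r y & hfun y < hfun x]].

Lemma hp_exists_aux :
  [/\ forall x, connect R r x -> x != r ->
        [/\ connect R r (pfun x), R x (pfun x) & hfun (pfun x) < hfun x],
      forall x, connect R r x -> hfun x = 0 -> x = r
    & forall x, R r x -> hfun x <= 1].
Proof.
split.
- move=> x cx xr; rewrite /pfun; case: pickP => [y /and3P[]|none] //.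
  exfalso; have [s [ps ls ss]] := hfun_path cx.
  case/lastP: s ps ls ss => [|t y0] ps ls ss.
    by move: xr; rewrite -ls eqxx.
  move: ps; rewrite rcons_path => /andP[pt ey].
  move: ls; rewrite last_rcons => ey0; subst y0.
  have := none (last r t); rewrite Rsym ey /=.
  have -> : connect R r (last r t) by apply/connectP; exists t.
  have := hfun_min pt (erefl _); rewrite -ss size_rcons ltnS => ->.
  done.
- move=> x cx h0; have [s [ps ls ss]] := hfun_path cx.
  by move: ss; rewrite h0 => /size0nil E; move: ls; rewrite E.
- move=> x rx; have := @hfun_min x [:: x]; rewrite /= rx => H; exact: H.
Qed.

Lemma hp_exists : exists h p,
  [/\ forall x, connect R r x -> x != r ->
        [/\ connect R r (p x), R x (p x) & (h (p x) < h x)%N],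
      forall x, connect R r x -> h x = 0 -> x = r
    & forall x, R r x -> h x <= 1].
Proof. by exists hfun, pfun; exact: hp_exists_aux. Qed.

End HP.

Section Gen.
Variables (T C : finType) (e : rel T) (L : T -> {set C}).
Hypothesis esy : symmetric e.
Hypothesis eirr : irreflexive e.
Hypothesis hdeg : forall u : T, deg e u + 1 <= #|L u|.

Definition nb x := [set y | e x y].
Definition upd (f : T -> C) z d := fun x => if x == z then d else f x.

Lemma upd_z f z d : upd f z d z = d.
Proof. by rewrite /upd eqxx. Qed.
Lemma upd_o f z d x : x != z -> upd f z d x = f x.
Proof. by rewrite /upd => /negbTE ->. Qed.

Lemma e_neq x y : e x y -> x != y.
Proof. by apply: contraTneq => ->; rewrite eirr. Qed.

Notation LC := (Lcolouring e L).
Notation RC := (reconf e L).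
Notation FZ := (frozen e L).

Lemma move_ok f z d : LC f -> d \in L z -> (forall y, e z y -> f y != d) ->
  LC (upd f z d) /\ RC f (upd f z d).
Proof.
move=> [fL fP] dL dN.
have LCu : LC (upd f z d).
  split=> [x|x y exy]; rewrite /upd.
    by case: eqP => [->|]; [exact: dL| move=> _; exact: fL].
  case: (x =P z) => [Ex|nx]; case: (y =P z) => [Ey|ny].
  - by move: exy; rewrite Ex Ey eirr.
  - by rewrite eq_sym; apply: dN; rewrite -Ex.
  - by apply: dN; rewrite -Ey esy.
  - exact: fP.
split=> //; apply: rt_step; split; first by split.
split=> //; exists z => x nx; by rewrite upd_o.
Qed.

Lemma reconf_sym f g : RC f g -> RC g f.
Proof.
elim=> [x y [Lx [Ly [u Hu]]]|x|x y z _ IH1 _ IH2].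
- apply: rt_step; split=> //; split=> //; exists u => w /Hu ->. done.
- exact: rt_refl.
- exact: rt_trans IH2 IH1.
Qed.

Lemma RCt f g k : RC f g -> RC g k -> RC f k.
Proof. by move=> h1 h2; apply: (@rt_trans _ _ f g k). Qed.

Lemma frozenP f y : FZ f y <-> (L y :\ f y \subset f @: nb y).
Proof.
split=> [H|/subsetP H c cL cn].
  apply/subsetP=> c; rewrite in_setD1 => /andP[cn cL].
  have [x [exy <-]] := H c cL cn.
  by apply: imset_f; rewrite inE.
have /imsetP[x] : c \in f @: nb y by apply: H; rewrite in_setD1 cn.
by rewrite inE => exy ->; exists x.
Qed.

Lemma frozen_img f y : FZ f y -> f @: nb y = L y :\ f y /\ {in nb y &, injective f}.
Proof.
move=> /frozenP sub.
have c1 : #|f @: nb y| <= #|nb y| by apply: leq_imset_card.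
have c2 : #|nb y| + 1 <= #|L y| by apply: hdeg.
have c3 : #|L y| <= #|L y :\ f y| + 1.
  by rewrite (cardsD1 (f y) (L y)) addnC leq_add2l leq_b1.
have c4 : #|L y :\ f y| <= #|f @: nb y| by apply: subset_leq_card.
have h : #|nb y| <= #|L y :\ f y| by have := leq_trans c2 c3; rewrite leq_add2r.
split.
  by apply/esym/eqP; rewrite eqEcard sub /= (leq_trans c1 h).
apply/imset_injP; rewrite eqn_leq c1 /=.
exact: leq_trans h c4.
Qed.

Lemma frozen_inL f y x : FZ f y -> e y x -> f x \in L y.
Proof.
move=> /frozen_img[E _] exy.
have : f x \in f @: nb y by apply: imset_f; rewrite inE.
by rewrite E in_setD1 => /andP[].
Qed.

Lemma frozen_inj f y x1 x2 : FZ f y -> e y x1 -> e y x2 -> f x1 = f x2 -> x1 = x2.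
Proof. by move=> /frozen_img[_ I] h1 h2; apply: I; rewrite inE. Qed.

Lemma unfrozen_of_free f y d : d \in L y -> d != f y -> (forall x, e y x -> f x != d) ->
  ~ FZ f y.
Proof.
move=> dL dn dN Fz; have [x [exy fx]] := Fz d dL dn.
by move: (dN x exy); rewrite fx eqxx.
Qed.

Lemma unfrozen_move f y : ~ FZ f y ->
  exists d, [/\ d \in L y, d != f y & forall x, e y x -> f x != d].
Proof.
move=> nF; have : ~~ (L y :\ f y \subset f @: nb y) by apply/negP => /frozenP.
case/subsetPn => d; rewrite in_setD1 => /andP[dn dL] dI.
exists d; split=> // x exy; apply: contraNneq dI => <-.
by apply: imset_f; rewrite inE.
Qed.

Lemma frozen_upd_far f z d y : y != z -> ~~ e y z -> (FZ (upd f z d) y <-> FZ f y).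
Proof.
move=> yz nyz.
have E : forall x, e y x -> upd f z d x = f x.
  by move=> x exy; rewrite upd_o //; apply: contraNneq nyz => <-.
split=> H c cL cn.
  have cn' : c != upd f z d y by rewrite upd_o.
  have [x [exy fx]] := H c cL cn'.
  by exists x; rewrite -E.
have cn' : c != f y by rewrite upd_o in cn.
have [x [exy fx]] := H c cL cn'.
by exists x; rewrite E.
Qed.

Lemma unfrozen_after_move f z d y : LC f -> FZ f y -> e z y -> d != f z ->
  ~ FZ (upd f z d) y.
Proof.
move=> [fL fP] Fy ezy dn.
have yz : y != z by rewrite eq_sym e_neq.
apply: (@unfrozen_of_free _ _ (f z)).
- by apply: frozen_inL Fy _; rewrite esy.
- by rewrite upd_o //; apply: fP.
- move=> x eyx; case: (x =P z) => [->|xz]; first by rewrite upd_z.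
  rewrite upd_o; last by apply/eqP.
  apply/eqP => E; apply: xz; apply: (frozen_inj Fy eyx) => //.
  by rewrite esy.
Qed.

Lemma moved_unfrozen f z d : LC f -> d != f z -> ~ FZ (upd f z d) z.
Proof.
move=> [fL fP] dn; apply: (@unfrozen_of_free _ _ (f z)).
- exact: fL.
- by rewrite upd_z eq_sym.
- move=> x ezx; have xz : x != z by rewrite eq_sym; apply: e_neq.
  by rewrite upd_o // eq_sym; apply: fP.
Qed.

Lemma two_same_unfrozen f y x1 x2 : e y x1 -> e y x2 -> x1 != x2 -> f x1 = f x2 -> ~ FZ f y.
Proof. by move=> h1 h2 n E Fz; move/eqP: n; apply; apply: (frozen_inj Fz). Qed.


Implicit Types (S : {set T}) (x y z r : T) (f g : T -> C).

Definition Ml (f : T -> C) (S : {set T}) x := L x :\: f @: (nb x :\: S).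

Lemma Ml_ext f g S x : (forall y, y \notin S -> f y = g y) -> Ml f S x = Ml g S x.
Proof.
move=> H; rewrite /Ml; congr (_ :\: _); apply: eq_in_imset => y.
by rewrite inE => /andP[yS _]; apply: H.
Qed.

Lemma Ml_sub f S x : Ml f S x \subset L x.
Proof. exact: subsetDl. Qed.

Lemma Ml_del_sub f S z x : Ml f (S :\ z) x \subset Ml f S x.
Proof.
apply: setDS; apply: imsetS; apply/subsetP=> y; rewrite !inE.
by case/andP=> /negbTE -> ->; rewrite andbF.
Qed.

Lemma Ml_del_far f S z x : ~~ e x z -> Ml f (S :\ z) x = Ml f S x.
Proof.
move=> nxz; rewrite /Ml (_ : nb x :\: (S :\ z) = nb x :\: S) //; apply/setP => y.
rewrite !inE; case exy: (e x y); rewrite ?andbF // andbT.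
have -> : (y != z) by apply/eqP => Ey; move: nxz; rewrite -Ey exy.
by rewrite andbT.
Qed.

Lemma Ml_del_mem f S z x c : c \in Ml f S x -> c != f z -> c \in Ml f (S :\ z) x.
Proof.
rewrite !inE => /andP[cI cL] cz; rewrite cL andbT; apply: contra cI.
case/imsetP=> y; rewrite !inE => /andP[yS exy] cE.
have yz : y != z by apply: contraNneq cz => <-; rewrite cE.
move: yS; rewrite yz /= => yS.
by rewrite cE; apply: imset_f; rewrite !inE exy yS.
Qed.

Lemma Ml_del_card f S z x (F : {set C}) :
  #|Ml f S x :\: F| <= #|Ml f (S :\ z) x :\: F| + e x z.
Proof.
case exz: (e x z); last by rewrite Ml_del_far ?exz // addn0.
apply: (@leq_trans (#|(Ml f S x :\: F) :\ f z| + 1)).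
  by rewrite (cardsD1 (f z) (Ml f S x :\: F)) addnC leq_add2l leq_b1.
rewrite leq_add2r; apply: subset_leq_card; apply/subsetP=> c.
move=> /setD1P[cz /setDP[cM cF]]; apply/setDP; split=> //.
exact: (@Ml_del_mem f S z x c cM cz).
Qed.

Lemma nbS_del x S z : z \in S -> #|nb x :&: S| = #|nb x :&: (S :\ z)| + e x z.
Proof.
move=> zS; rewrite (cardsD1 z (nb x :&: S)) addnC.
have -> : (nb x :&: S) :\ z = nb x :&: (S :\ z).
  by apply/setP=> y; rewrite !inE; case: (y == z); rewrite ?andbF.
by rewrite !inE zS andbT.
Qed.

Lemma hyp_del f f' S z (a : T -> nat) : z \in S -> (forall y, y \notin S -> f' y = f y) ->
  (forall x, x \in S -> #|nb x :&: S| + a x <= #|Ml f S x|) ->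
  forall x, x \in S :\ z -> #|nb x :&: (S :\ z)| + a x <= #|Ml f' (S :\ z) x|.
Proof.
move=> zS E H x; rewrite in_setD1 => /andP[_ xS].
have E2 : Ml f S x = Ml f' S x by apply: Ml_ext => y /E ->.
have := H x xS; rewrite (nbS_del x zS) E2.
have := Ml_del_card f' S z x set0; rewrite !setD0.
case: (e x z); rewrite ?addn0 ?addn1 => h1 h2 //; last exact: leq_trans h2 h1.
by move: (leq_trans h2 h1); rewrite addSn ltnS.
Qed.

Lemma exists_max (A : {set T}) (h : T -> nat) y : y \in A ->
  exists z, z \in A /\ forall x, x \in A -> h x <= h z.
Proof. by move=> yA; case: (@arg_maxnP T y (mem A) h yA) => z zA H; exists z. Qed.

Definition hp_ok S r (h : T -> nat) (p : T -> T) :=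
  forall x, x \in S -> x != r -> [/\ p x \in S, e x (p x) & h (p x) < h x].

Lemma hp_del S r h p z : hp_ok S r h p -> z \in S ->
  (forall x, x \in S -> x != r -> h x <= h z) -> hp_ok (S :\ z) r h p.
Proof.
move=> H zS M x; rewrite in_setD1 => /andP[xz xS] xr.
have [pS ep hp] := H x xS xr; split=> //.
rewrite in_setD1 pS andbT; apply/eqP => E.
by move: (leq_trans hp (M x xS xr)); rewrite E ltnn.
Qed.


Lemma card_pick (A : {set C}) : 0 < #|A| -> exists c, c \in A.
Proof. by rewrite card_gt0 => /set0Pn. Qed.

Lemma exist_col n : forall S r h p (g : T -> C) (F : T -> {set C}), #|S| <= n ->
  r \in S -> hp_ok S r h p ->
  (forall x, x \notin S -> g x \in L x) ->
  (forall x y, x \notin S -> y \notin S -> e x y -> g x != g y) ->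
  (forall x, x \in S -> #|nb x :&: S| + (x == r) <= #|Ml g S x :\: F x|) ->
  exists k, [/\ LC k, forall x, x \notin S -> k x = g x & forall x, x \in S -> k x \notin F x].
Proof.
elim: n => [|n IH] S r h p g F.
  by move=> cS rS; move: cS; rewrite leqn0 cards_eq0 => /eqP E; rewrite E inE in rS.
move=> cS rS hp gL gP hd.
case: (set_0Vmem (S :\ r)) => [E0|[z0 z0S]].
  have Sr : forall x, x != r -> x \notin S.
    move=> x xr; apply/negP => xS.
    have : x \in S :\ r by rewrite in_setD1 xr xS.
    by rewrite E0 inE.
  have := hd r rS; rewrite eqxx addn1 => /(leq_ltn_trans (leq0n _)) /card_pick[col].
  move=> /setDP[colM colF].
  have colL : col \in L r by move: colM => /setDP[].
  exists (upd g r col); split.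
  - split=> [x|x y exy].
      by case: (x =P r) => [->|/eqP xr]; rewrite ?upd_z ?upd_o //; apply: gL; apply: Sr.
    have colN : forall w, e r w -> g w != col.
      move=> w erw; apply: contraNneq (setDP colM).2 => <-.
      apply: imset_f; rewrite !inE erw andbT; apply: Sr; rewrite eq_sym; exact: e_neq.
    case: (x =P r) => [Ex|/eqP xr]; case: (y =P r) => [Ey|/eqP yr].
    + by move: exy; rewrite Ex Ey eirr.
    + by rewrite Ex upd_z upd_o // eq_sym; apply: colN; rewrite -Ex.
    + by rewrite Ey upd_z upd_o //; apply: colN; rewrite -Ey esy.
    + by rewrite !upd_o //; apply: gP => //; apply: Sr.
  - by move=> x xS; rewrite upd_o //; apply: contraNneq xS => ->.
  - move=> x xS; case: (x =P r) => [->|/eqP xr]; first by rewrite upd_z.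
    by move: (Sr x xr); rewrite xS.
have [z [zS zmax]] := exists_max h z0S.
move: zS; rewrite in_setD1 => /andP[zr zS].
have zmax' : forall x, x \in S -> x != r -> h x <= h z.
  by move=> x xS xr; apply: zmax; rewrite in_setD1 xr xS.
have [pS ep _] := hp z zS zr.
have : 0 < #|Ml g S z :\: F z|.
  apply: leq_trans (hd z zS); rewrite (negbTE zr) addn0 card_gt0; apply/set0Pn.
  by exists (p z); rewrite !inE ep pS.
move=> /card_pick[col] /setDP[colM colF].
have colL : col \in L z by move: colM => /setDP[].
have colN : forall y, y \notin S -> e z y -> g y != col.
  move=> y yS ezy; apply: contraNneq (setDP colM).2 => <-.
  by apply: imset_f; rewrite !inE ezy yS.
set g1 := upd g z col.
have E1 : forall y, y \notin S -> g1 y = g y.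
  by move=> y yS; rewrite /g1 upd_o //; apply: contraNneq yS => ->.
have out1 : forall x, x \notin S :\ z -> x = z \/ x \notin S.
  move=> x; rewrite in_setD1 negb_and negbK; case: (x =P z) => [->|_] /=; first by left.
  by right.
have [k [kL kE kF]] : exists k, [/\ LC k, forall x, x \notin S :\ z -> k x = g1 x
     & forall x, x \in S :\ z -> k x \notin F x].
  apply: (IH (S :\ z) r h p g1 F).
- by move: cS; rewrite (cardsD1 z S) zS add1n ltnS.
- by rewrite in_setD1 eq_sym zr rS.
- exact: hp_del.
- move=> x /out1 [->|xS]; first by rewrite /g1 upd_z.
  by rewrite E1 //; apply: gL.
- move=> x y /out1 hx /out1 hy exy.
  case: hx => [Ex|xS]; case: hy => [Ey|yS].
  + by move: exy; rewrite Ex Ey eirr.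
  + by rewrite Ex (E1 y yS) /g1 upd_z eq_sym; apply: colN => //; rewrite -Ex.
  + by rewrite Ey (E1 x xS) /g1 upd_z; apply: colN => //; rewrite -Ey esy.
  + by rewrite !E1 //; apply: gP.
- move=> x; rewrite in_setD1 => /andP[xz xS].
  have := hd x xS; rewrite (nbS_del x zS).
  have E2 : Ml g S x = Ml g1 S x by apply: Ml_ext => y /E1 ->.
  rewrite E2; have := Ml_del_card g1 S z x (F x).
  case: (e x z) => h1 h2.
    by move: (leq_trans h2 h1); rewrite -addnA (addnC 1) addnA leq_add2r.
  by move: h1 h2; rewrite /nat_of_bool !addn0 => h1 h2; exact: leq_trans h2 h1.
exists k; split=> //.
- by move=> x xS; rewrite kE ?E1 //; rewrite in_setD1 negb_and xS orbT.
- move=> x xS; case: (x =P z) => [->|/eqP xz].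
    by rewrite kE ?in_setD1 ?eqxx // /g1 upd_z.
  by apply: kF; rewrite in_setD1 xz xS.
Qed.

Lemma slack_conn n : forall S r h p f g, #|S| <= n -> r \in S -> hp_ok S r h p ->
  LC f -> LC g -> (forall x, x \notin S -> f x = g x) ->
  (forall x, x \in S -> #|nb x :&: S| + (1 + (x == r)) <= #|Ml f S x|) -> RC f g.
Proof.
elim: n => [|n IH] S r h p f g.
  by move=> cS rS; move: cS; rewrite leqn0 cards_eq0 => /eqP E; rewrite E inE in rS.
move=> cS rS hp fL gL Efg hd.
case: (set_0Vmem (S :\ r)) => [E0|[z0 z0S]].
  have Sr : forall x, x != r -> x \notin S.
    move=> x xr; apply/negP => xS.
    have : x \in S :\ r by rewrite in_setD1 xr xS.
    by rewrite E0 inE.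
  apply: rt_step; split=> //; split=> //; exists r => x xr; apply: Efg; exact: Sr.
have [z [zS zmax]] := exists_max h z0S.
move: zS; rewrite in_setD1 => /andP[zr zS].
have zmax' : forall x, x \in S -> x != r -> h x <= h z.
  by move=> x xS xr; apply: zmax; rewrite in_setD1 xr xS.
have cS' : #|S :\ z| <= n by move: cS; rewrite (cardsD1 z S) zS add1n ltnS.
have rS' : r \in S :\ z by rewrite in_setD1 eq_sym zr rS.
have hp' := hp_del hp zS zmax'.
have hyp' : forall f', (forall y, y \notin S -> f' y = f y) ->
    forall x, x \in S :\ z -> #|nb x :&: (S :\ z)| + (1 + (x == r)) <= #|Ml f' (S :\ z) x|.
  by move=> f' E'; exact: (@hyp_del f f' S z (fun x => 1 + (x == r)) zS E' hd).
have out1 : forall x, x \notin S :\ z -> x = z \/ x \notin S.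
  move=> x; rewrite in_setD1 negb_and negbK; case: (x =P z) => [->|_] /=; first by left.
  by right.
case: (f z =P g z) => [Ez|/eqP nEz].
  apply: (IH (S :\ z) r h p) => //; last by apply: hyp'.
  by move=> x /out1 [->|xS] //; apply: Efg.
have [fLL fP] := fL.
have hdk : forall x, x \in S :\ z -> #|nb x :&: (S :\ z)| + (x == r) <=
    #|Ml f (S :\ z) x :\: (if e x z then [set g z] else set0)|.
  move=> x xS; have := hyp' f (fun _ _ => erefl) x xS.
  case: (e x z) => h1.
    have := cardsD1 (g z) (Ml f (S :\ z) x); have := leq_b1 (g z \in Ml f (S :\ z) x).
    lia.
  by rewrite setD0; lia.
have [k [kL kE kF]] := @exist_col #|S :\ z| (S :\ z) r h p f
   (fun x => if e x z then [set g z] else set0) (leqnn _) rS' hp'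
   (fun x _ => fLL x) (fun x y _ _ exy => fP x y exy) hdk.
have [gLL gP] := gL.
have kEz : forall x, x \notin S -> k x = f x.
  by move=> x xS; apply: kE; rewrite in_setD1 negb_and xS orbT.
have RC1 : RC f k.
  apply: (IH (S :\ z) r h p) => //; last by apply: hyp'.
  by move=> x /kE ->.
have kN : forall y, e z y -> k y != g z.
  move=> y ezy; case: (boolP (y \in S :\ z)) => yS.
    by have := kF y yS; rewrite esy ezy inE.
  case: (out1 y yS) => [Ey|yS'].
    by move: ezy; rewrite Ey eirr.
  by rewrite kEz // Efg //; apply: gP; rewrite esy.
have [k'L RC2] := move_ok kL (gLL z) kN.
apply: RCt RC1 (RCt RC2 _).
apply: (IH (S :\ z) r h p) => //.
- move=> x /out1 [->|xS]; first by rewrite upd_z.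
  by rewrite upd_o ?kEz ?Efg //; apply: contraNneq xS => ->.
- apply: hyp' => y yS; rewrite upd_o ?kEz //; apply: contraNneq yS => ->.
  done.
Qed.


Lemma LC_rc f g : RC f g -> LC f -> LC g.
Proof.
elim=> [x y [_ [Ly _]]|x|x y z _ IH1 _ IH2] //.
by move=> /IH1 /IH2.
Qed.

Lemma blockers_nadj g b1 b2 : LC g -> g b1 = g b2 -> ~~ e b1 b2.
Proof. by move=> [_ gP] E; apply/negP => /gP; rewrite E eqxx. Qed.

Section Reach.
Variables (u w : T) (c : C).
Hypothesis euw : e u w.

Definition Goal f := exists g, RC f g /\ g u = c.

Lemma Goal_rc f f1 : RC f f1 -> Goal f1 -> Goal f.
Proof. by move=> H [g [H1 H2]]; exists g; split=> //; apply: RCt H H1. Qed.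

Section Star.
Variables (S : {set T}) (f0 : T -> C).
Hypothesis uS : u \in S.
Hypothesis wS : w \in S.
Hypothesis star : forall x, x \in S -> x != u -> e u x.
Hypothesis cu : c \in Ml f0 S u.
Hypothesis cw : c \notin Ml f0 S w.

Definition Ok g := LC g /\ (forall x, x \notin S -> g x = f0 x).

Hypothesis IHapp : forall z g, z \in S -> z != u -> z != w -> Ok g -> g z != c ->
  (exists y, [/\ y \in S, y != z & ~ FZ g y]) -> Goal g.

Lemma Ok_move g x d : Ok g -> x \in S -> d \in L x -> (forall y, e x y -> g y != d) ->
  Ok (upd g x d) /\ RC g (upd g x d).
Proof.
move=> [gL gE] xS dL dN; have [LC1 RC1] := move_ok gL dL dN.
split=> //; split=> // y yS; rewrite upd_o ?gE //; apply: contraNneq yS => ->; done.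
Qed.

Lemma Goal_mv g x d : Ok g -> x \in S -> d \in L x -> (forall y, e x y -> g y != d) ->
  (Ok (upd g x d) -> Goal (upd g x d)) -> Goal g.
Proof.
move=> Og xS dL dN H; have [O1 R1] := Ok_move Og xS dL dN.
exact: Goal_rc R1 (H O1).
Qed.

Lemma Ml_ok g x : Ok g -> Ml g S x = Ml f0 S x.
Proof. by move=> [_ E]; apply: Ml_ext. Qed.

Lemma cLu : c \in L u.
Proof. by move: cu => /setDP[]. Qed.

Lemma c_out g y : Ok g -> y \notin S -> e u y -> g y != c.
Proof.
move=> Og yS euy; move: cu; rewrite -(Ml_ok u Og) => /setDP[_ cI].
by apply: contraNneq cI => <-; apply: imset_f; rewrite !inE euy yS.
Qed.

Lemma wit_ne g : Ok g -> g w != c.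
Proof.
move=> Og; have [[gL gP] _] := Og; apply: contraNneq cw => <-.
rewrite -(Ml_ok w Og); apply/setDP; split; first exact: gL.
apply/imsetP => -[y]; rewrite !inE => /andP[_ ewy] /eqP.
by apply/negP; apply: gP.
Qed.

Lemma wit_nadj g b : Ok g -> FZ g w -> b \in S -> g b = c -> ~~ e w b.
Proof.
move=> Og Fw bS gb; apply/negP => ewb.
have cLw : c \in L w by rewrite -gb; apply: frozen_inL Fw ewb.
have : c \notin Ml g S w by rewrite (Ml_ok w Og).
rewrite in_setD cLw andbT negbK => /imsetP[x0]; rewrite !inE => /andP[x0S ewx] cx.
have := frozen_inj Fw ewb ewx; rewrite gb cx => /(_ erefl) E.
by move: x0S; rewrite -E bS.
Qed.

Lemma finish g : Ok g -> (forall x, x \in S -> x != u -> g x != c) -> Goal g.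
Proof.
move=> Og H; have [[gL gP] gE] := Og.
have cN : forall y, e u y -> g y != c.
  move=> y euy; case: (boolP (y \in S)) => yS.
    by apply: H => //; rewrite eq_sym; apply: e_neq.
  exact: c_out.
have [_ R1] := move_ok (conj gL gP) cLu cN.
by exists (upd g u c); split=> //; rewrite upd_z.
Qed.

Lemma one_blocker g b : Ok g -> b \in S -> b != u -> g b = c ->
  (forall x, x \in S -> x != u -> x != b -> g x != c) -> (~ FZ g b \/ ~ FZ g u) -> Goal g.
Proof.
move=> Og bS bu gb others hU.
case: (g u =P c) => [gu|/eqP guc]; first by exists g; split=> //; apply: rt_refl.
have [[gL gP] gE] := Og.
case: (classic (FZ g b)) => [bF|bU].
  have uU : ~ FZ g u by case: hU.
  have [d [dL dn dN]] := unfrozen_move uU.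
  apply: (Goal_mv Og uS dL dN) => O1.
  have ebu : e b u by rewrite esy; apply: star.
  have aL : g u \in L b by apply: frozen_inL bF ebu.
  have aN : forall y, e b y -> upd g u d y != g u.
    move=> y eby; case: (y =P u) => [->|/eqP yu]; first by rewrite upd_z.
    rewrite upd_o //; apply/eqP => E; move/eqP: yu; apply.
    exact: (frozen_inj bF eby ebu E).
  apply: (Goal_mv O1 bS aL aN) => O2; apply: finish => // x xS xu.
  case: (x =P b) => [->|/eqP xb]; first by rewrite upd_z.
  by rewrite !upd_o //; apply: others.
have [d [dL dn dN]] := unfrozen_move bU.
apply: (Goal_mv Og bS dL dN) => O1; apply: finish => // x xS xu.
case: (x =P b) => [->|/eqP xb]; first by rewrite upd_z -gb.
by rewrite upd_o //; apply: others.
Qed.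


Lemma two_blockers g b1 b2 : Ok g -> b1 \in S -> b2 \in S -> b1 != u -> b2 != u -> b1 != b2 ->
  g b1 = c -> g b2 = c -> ~ FZ g b1 ->
  (forall x, x \in S -> x != u -> x != b1 -> x != b2 -> g x != c) -> Goal g.
Proof.
move=> Og b1S b2S b1u b2u b12 gb1 gb2 b1U others.
have [[gL gP] gE] := Og.
have eub1 : e u b1 by apply: star.
have eub2 : e u b2 by apply: star.
have guc : g u != c by rewrite -gb1; apply: gP.
have b1w : b1 != w by apply: contraNneq (wit_ne Og) => <-; rewrite gb1.
have b2w : b2 != w by apply: contraNneq (wit_ne Og) => <-; rewrite gb2.
have nb12 : ~~ e b1 b2 by apply: blockers_nadj (conj gL gP) _; rewrite gb1 gb2.
have [d [dL dn dN]] := unfrozen_move b1U.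
have [O1 R1] := Ok_move Og b1S dL dN.
set g1 := upd g b1 d in O1 R1.
have g1b1 : g1 b1 = d by rewrite /g1 upd_z.
have g1o : forall y, y != b1 -> g1 y = g y by move=> y yb; rewrite /g1 upd_o.
have dc : d != c by rewrite -gb1.
case: (classic (FZ g b2)) => [b2F|b2U]; last first.
  apply: (Goal_rc R1); apply: (IHapp b1S b1u b1w O1); first by rewrite g1b1.
  exists b2; split=> //; first by rewrite eq_sym.
  have b21 : b2 != b1 by rewrite eq_sym.
  have nb21 : ~~ e b2 b1 by rewrite esy.
  by move/(frozen_upd_far _ _ b21 nb21).
case: (classic (exists z, [/\ z \in S, z != u, z != w, z != b1 & z != b2])) => [[z [zS zu zw zb1 zb2]]|noZ].
  apply: (IHapp zS zu zw Og); first by apply: others.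
  exists u; split=> //; first by rewrite eq_sym.
  by apply: (two_same_unfrozen eub1 eub2 b12); rewrite gb1 gb2.
case: (classic (exists y, [/\ y \in S, y != b1 & ~ FZ g1 y])) => [Hy|allF].
  by apply: (Goal_rc R1); apply: (IHapp b1S b1u b1w O1) => //; rewrite g1b1.
have FZ1 : forall y, y \in S -> y != b1 -> FZ g1 y.
  by move=> y yS yb; apply: NNPP => yU; apply: allF; exists y.
have uw : u != w by apply: e_neq.
have ub1 : u != b1 by rewrite eq_sym.
have wb1 : w != b1 by rewrite eq_sym.
have b21 : b2 != b1 by rewrite eq_sym.
have Fu := FZ1 u uS ub1.
have Fw := FZ1 w wS wb1.
have Fb2 := FZ1 b2 b2S b21.
have hS : forall x, x \in S -> [\/ x = u, x = w, x = b1 | x = b2].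
  move=> x xS; case: (x =P u) => [|/eqP xu]; first by constructor 1.
  case: (x =P w) => [|/eqP xw]; first by constructor 2.
  case: (x =P b1) => [|/eqP xb1]; first by constructor 3.
  case: (x =P b2) => [|/eqP xb2]; first by constructor 4.
  by exfalso; apply: noZ; exists x.
set a := g u; set p := g w.
have g1u : g1 u = a by rewrite g1o // eq_sym.
have g1w : g1 w = p by rewrite g1o // eq_sym.
have g1b2 : g1 b2 = c by rewrite g1o.
have dLu : d \in L u by rewrite -g1b1; exact: (@frozen_inL g1 u b1 Fu eub1).
have da : d != a.
  by rewrite -g1b1 -g1u; have [[_ P1] _] := O1; rewrite eq_sym; apply: P1.
have eb2u : e b2 u by rewrite esy.
have ewu : e w u by rewrite esy.
have aLb2 : a \in L b2 by rewrite -g1u; exact: (@frozen_inL g1 b2 u Fb2 eb2u).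
have aLw : a \in L w by rewrite -g1u; exact: (@frozen_inL g1 w u Fw ewu).
have pLu : p \in L u by rewrite -g1w; exact: (@frozen_inL g1 u w Fu euw).
have pc : p != c by exact: (wit_ne Og).
have ap : a != p by exact: (gP u w euw).
have pd : p != d.
  apply/eqP => E; move/eqP: b1w; apply; apply: (frozen_inj Fu eub1 euw).
  by rewrite g1b1 g1w E.
have nwb2 : ~~ e w b2 by apply: (wit_nadj O1 Fw b2S g1b2).
have N1 : forall y, e u y -> g y != d.
  move=> y euy; case: (y =P b1) => [->|/eqP yb]; first by rewrite gb1 eq_sym.
  apply/eqP => E; have := frozen_inj Fu euy eub1; rewrite g1b1 g1o // E => /(_ erefl) Ey.
  by rewrite Ey eqxx in yb.
apply: (Goal_mv Og uS dLu N1) => O2.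
have N2 : forall y, e b2 y -> upd g u d y != a.
  move=> y eb2y; case: (y =P u) => [->|/eqP yu]; first by rewrite upd_z.
  have yb1 : y != b1 by apply: contraNneq nb12 => <-; rewrite esy.
  rewrite upd_o // -g1o //; apply/eqP => E.
  have := frozen_inj Fb2 eb2y eb2u; rewrite E g1u => /(_ erefl) Ey.
  by rewrite Ey eqxx in yu.
apply: (Goal_mv O2 b2S aLb2 N2) => O3.
have N3 : forall y, e w y -> upd (upd g u d) b2 a y != a.
  move=> y ewy; have yb2 : y != b2 by apply: contraNneq nwb2 => <-.
  rewrite upd_o //; case: (y =P u) => [->|/eqP yu]; first by rewrite upd_z.
  rewrite upd_o //; case: (y =P b1) => [->|/eqP yb1]; first by rewrite gb1 eq_sym.
  rewrite -g1o //; apply/eqP => E.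
  have := frozen_inj Fw ewy ewu; rewrite E g1u => /(_ erefl) Ey.
  by rewrite Ey eqxx in yu.
apply: (Goal_mv O3 wS aLw N3) => O4.
have N4 : forall y, e u y -> upd (upd (upd g u d) b2 a) w a y != p.
  move=> y euy; case: (y =P w) => [->|/eqP yw]; first by rewrite upd_z.
  rewrite upd_o //; case: (y =P b2) => [->|/eqP yb2]; first by rewrite upd_z.
  have yu : y != u by rewrite eq_sym; apply: e_neq.
  rewrite upd_o // upd_o //; case: (y =P b1) => [->|/eqP yb1].
    by rewrite gb1 eq_sym.
  rewrite -g1o //; apply/eqP => E.
  have := frozen_inj Fu euy euw; rewrite E g1w => /(_ erefl) Ey.
  by rewrite Ey eqxx in yw.
apply: (Goal_mv O4 uS pLu N4) => O5.
have N5 : forall y, e b1 y -> upd (upd (upd (upd g u d) b2 a) w a) u p y != d.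
  move=> y eb1y; case: (y =P u) => [->|/eqP yu]; first by rewrite upd_z.
  rewrite upd_o //; case: (y =P w) => [->|/eqP yw]; first by rewrite upd_z eq_sym.
  have yb2 : y != b2 by apply: contraNneq nb12 => <-.
  rewrite upd_o // upd_o // upd_o //.
  exact: dN.
apply: (Goal_mv O5 b1S dL N5) => O6.
apply: finish => // x xS xu.
case: (hS x xS) => [Ex|->|->|->].
- by rewrite Ex eqxx in xu.
- by rewrite upd_o // upd_o 1?eq_sym // upd_z eq_sym.
- by rewrite upd_z.
- by rewrite upd_o // upd_o // upd_o // upd_z.
Qed.


Lemma star_case : LC f0 -> (exists y, y \in S /\ ~ FZ f0 y) -> Goal f0.
Proof.
move=> f0L [y0 [y0S y0U]].
have Og : Ok f0 by split.
case: (f0 u =P c) => [gu|/eqP guc]; first by exists f0; split=> //; apply: rt_refl.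
have [f0LL f0P] := f0L.
case: (classic (exists b1, [/\ b1 \in S, b1 != u, f0 b1 = c & ~ FZ f0 b1])) =>
   [[b1 [b1S b1u gb1 b1U]]|noUB].
  case: (classic (exists b2, [/\ b2 \in S, b2 != u, b2 != b1 & f0 b2 = c])) =>
     [[b2 [b2S b2u b21 gb2]]|noB2]; last first.
    apply: (one_blocker Og b1S b1u gb1) => [x xS xu xb|]; last by left.
    by apply/eqP => E; apply: noB2; exists x.
  case: (classic (exists b3, [/\ b3 \in S, b3 != u, b3 != b1, b3 != b2 & f0 b3 = c])) =>
     [[b3 [b3S b3u b31 b32 gb3]]|noB3]; last first.
    apply: (two_blockers Og b1S b2S b1u b2u _ gb1 gb2 b1U); first by rewrite eq_sym.
    by move=> x xS xu xb1 xb2; apply/eqP => E; apply: noB3; exists x.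
  have [d [dL dn dN]] := unfrozen_move b1U.
  have [O1 R1] := Ok_move Og b1S dL dN.
  have b1w : b1 != w by apply: contraNneq (wit_ne Og) => <-; rewrite gb1.
  apply: (Goal_rc R1); apply: (IHapp b1S b1u b1w O1); first by rewrite upd_z -gb1.
  exists u; split=> //; first by rewrite eq_sym.
  apply: (two_same_unfrozen (x1 := b2) (x2 := b3)); try apply: star => //.
    by rewrite eq_sym.
  by rewrite !upd_o // gb2 gb3.
case: (classic (exists b, [/\ b \in S, b != u & f0 b = c])) => [[b [bS bu gb]]|noB]; last first.
  by apply: finish => // x xS xu; apply/eqP => E; apply: noB; exists x.
have bF : FZ f0 b by apply: NNPP => bU; apply: noUB; exists b.
have ebu : e b u by rewrite esy; apply: star.
have bw : b != w by apply: contraNneq (wit_ne Og) => <-; rewrite gb.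
case: (classic (FZ f0 u)) => [uF|uU]; last first.
  case: (classic (exists b2, [/\ b2 \in S, b2 != u, b2 != b & f0 b2 = c])) =>
     [[b2 [b2S b2u b2b gb2]]|noB2]; last first.
    apply: (one_blocker Og bS bu gb) => [x xS xu xb|]; last by right.
    by apply/eqP => E; apply: noB2; exists x.
  have b2F : FZ f0 b2 by apply: NNPP => bU; apply: noUB; exists b2.
  have eb2u : e b2 u by rewrite esy; apply: star.
  have [d [dL dn dN]] := unfrozen_move uU.
  apply: (Goal_mv Og uS dL dN) => O1.
  have aL : f0 u \in L b by apply: frozen_inL bF ebu.
  have aN : forall y, e b y -> upd f0 u d y != f0 u.
    move=> y eby; case: (y =P u) => [->|/eqP yu]; first by rewrite upd_z.
    rewrite upd_o //; apply/eqP => E; have := frozen_inj bF eby ebu E => Ey.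
    by rewrite Ey eqxx in yu.
  have [O2 R2] := Ok_move O1 bS aL aN.
  apply: (Goal_rc R2); apply: (IHapp bS bu bw O2); first by rewrite upd_z.
  exists b2; split=> //.
  apply: (@unfrozen_of_free _ _ (f0 u)).
  - by apply: frozen_inL b2F eb2u.
  - by rewrite !upd_o // ?gb2 // eq_sym.
  - have nbb2 : ~~ e b2 b by apply: (blockers_nadj f0L); rewrite gb2 gb.
    move=> y eb2y; case: (y =P b) => [Eyb|/eqP yb].
      by rewrite Eyb (negbTE nbb2) in eb2y.
    rewrite upd_o //; case: (y =P u) => [->|/eqP yu]; first by rewrite upd_z.
    rewrite upd_o //; apply/eqP => E; have := frozen_inj b2F eb2y eb2u E => Ey.
    by rewrite Ey eqxx in yu.
have noB2 : forall x, x \in S -> x != u -> x != b -> f0 x != c.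
  move=> x xS xu xb; apply/eqP => E.
  by apply: (two_same_unfrozen (star xS xu) (star bS bu) xb _ uF); rewrite E gb.
case: (classic (exists z, [/\ z \in S, z != u, z != w & z != b])) => [[z [zS zu zw zb]]|noZ].
  case: (classic (exists y, [/\ y \in S, y != z & ~ FZ f0 y])) => [Hy|onlyz].
    exact: (IHapp zS zu zw Og (noB2 z zS zu zb) Hy).
  have y0z : y0 = z.
    by apply: NNPP => /eqP ne; apply: onlyz; exists y0.
  subst y0.
  have [d [dL dn dN]] := unfrozen_move y0U.
  have ezu : e z u by rewrite esy; apply: star.
  have uU1 : ~ FZ (upd f0 z d) u by apply: unfrozen_after_move.
  have [O1 R1] := Ok_move Og zS dL dN.
  case: (d =P c) => [dc|/eqP dnc].
    apply: (Goal_rc R1); apply: (two_blockers O1 zS bS zu bu zb).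
    - by rewrite upd_z.
    - by rewrite upd_o // eq_sym.
    - by apply: moved_unfrozen.
    - move=> x xS xu xz xb; rewrite upd_o //; exact: noB2.
  apply: (Goal_rc R1); apply: (IHapp zS zu zw O1); first by rewrite upd_z.
  by exists u; split=> //; rewrite eq_sym.
have y0w : y0 = w.
  apply: NNPP => /eqP ne; apply: noZ; exists y0; split=> //.
  - by apply/eqP => E; apply: y0U; rewrite E.
  - by apply/eqP => E; apply: y0U; rewrite E.
subst y0.
have [q [qL qn qN]] := unfrozen_move y0U.
have ewu : e w u by rewrite esy.
have uU1 : ~ FZ (upd f0 w q) u by apply: unfrozen_after_move.
have [O1 R1] := Ok_move Og wS qL qN.
apply: (Goal_rc R1); apply: (one_blocker O1 bS bu).
- by rewrite upd_o.
- move=> x xS xu xb; case: (x =P w) => [->|/eqP xw]; first exact: wit_ne.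
  by exfalso; apply: noZ; exists x.
- by right.
Qed.

End Star.

Lemma reach n : forall S f h p, #|S| <= n -> LC f -> u \in S -> w \in S -> hp_ok S u h p ->
  (forall x, x \in S -> h x = 0 -> x = u) -> (forall x, x \in S -> e u x -> h x <= 1) ->
  (forall x, x \in S -> #|nb x :&: S| + 1 <= #|Ml f S x|) ->
  c \in Ml f S u -> c \notin Ml f S w -> (exists y, y \in S /\ ~ FZ f y) -> Goal f.
Proof.
elim: n => [|n IH] S f h p.
  by move=> cS _ uS; move: cS; rewrite leqn0 cards_eq0 => /eqP E; rewrite E inE in uS.
move=> cS fL uS wS hp H2 H3 hd cu cw [y0 [y0S y0U]].
have uw : u != w by apply: e_neq.
have wSu : w \in S :\ u by rewrite in_setD1 eq_sym uw wS.
have [z [zSu zmax]] := exists_max h wSu.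
move: zSu; rewrite in_setD1 => /andP[zu zS].
have IHz : forall z, z \in S -> z != u -> z != w ->
    (forall x, x \in S -> x != u -> h x <= h z) ->
    forall g, LC g -> (forall x, x \notin S -> g x = f x) -> (~~ e u z \/ g z != c) ->
    (exists y, y \in S :\ z /\ ~ FZ g y) -> Goal g.
  move=> z' z'S z'u z'w zm g gL gE hz hy.
  have MuE : Ml g S u = Ml f S u by apply: Ml_ext => y /gE.
  have MwE : Ml g S w = Ml f S w by apply: Ml_ext => y /gE.
  apply: (IH (S :\ z') g h p).
  - by move: cS; rewrite (cardsD1 z' S) z'S add1n ltnS.
  - exact: gL.
  - by rewrite in_setD1 eq_sym z'u uS.
  - by rewrite in_setD1 eq_sym z'w wS.
  - exact: hp_del.
  - by move=> x; rewrite in_setD1 => /andP[_ xS]; apply: H2.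
  - by move=> x; rewrite in_setD1 => /andP[_ xS]; apply: H3.
  - exact: (@hyp_del f g S z' (fun _ => 1) z'S gE hd).
  - have cu' : c \in Ml g S u by move: cu; rewrite -MuE.
    case: hz => [nuz|gz]; first by rewrite Ml_del_far.
    by apply: (@Ml_del_mem g S z' u c cu'); rewrite eq_sym.
  - apply: contra cw => H; rewrite -MwE.
    by apply: (subsetP (Ml_del_sub g S z' w)).
  - exact: hy.
have zmax' : forall x, x \in S -> x != u -> h x <= h z.
  by move=> x xS xu; apply: zmax; rewrite in_setD1 xu xS.
case: (leqP 2 (h z)) => [hz2|hz1].
  have nuz : ~~ e u z by apply/negP => /(H3 z zS); rewrite leqNgt (leq_trans _ hz2).
  have zw : z != w by apply: contraNneq nuz => ->.
  case: (classic (exists y, y \in S :\ z /\ ~ FZ f y)) => [Hy|onlyz].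
    exact: (IHz z zS zu zw zmax' f fL (fun _ _ => erefl) (or_introl nuz) Hy).
  have y0z : y0 = z.
    apply: NNPP => /eqP ne; apply: onlyz; exists y0; split=> //.
    by rewrite in_setD1 ne y0S.
  subst y0.
  have [d [dL dn dN]] := unfrozen_move y0U.
  have [L1 R1] := move_ok fL dL dN.
  have [pS ep hpz] := hp z zS zu.
  have pz : p z != z by apply: contraTneq hpz => ->; rewrite ltnn.
  have pF : FZ f (p z).
    by apply: NNPP => pU; apply: onlyz; exists (p z); split=> //; rewrite in_setD1 pz pS.
  apply: (Goal_rc R1); apply: (IHz z zS zu zw zmax' _ L1) => //.
  - by move=> x xS; rewrite upd_o //; apply: contraNneq xS => ->.
  - by left.
  exists (p z); split; first by rewrite in_setD1 pz pS.
  by apply: unfrozen_after_move.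
have hall : forall x, x \in S -> x != u -> h x = 1.
  move=> x xS xu; have h1 := zmax' x xS xu.
  have h0 : h x != 0 by apply/eqP => /(H2 x xS) E; rewrite E eqxx in xu.
  lia.
have star : forall x, x \in S -> x != u -> e u x.
  move=> x xS xu; have [pS ep hpx] := hp x xS xu.
  move: hpx; rewrite (hall x xS xu) ltnS leqn0 => /eqP /(H2 _ pS) E.
  by rewrite esy -E.
apply: (@star_case S f uS wS star cu cw) => //; last by exists y0.
move=> z' g z'S z'u z'w [gL gE] gz [y [yS yz yU]].
apply: (IHz z' z'S z'u z'w _ g gL gE (or_intror gz)).
  by move=> x xS xu; rewrite !hall.
by exists y; split=> //; rewrite in_setD1 yz yS.
Qed.

End Reach.
End Gen.

Unset Implicit Arguments.

Theorem mainTheorem18 (T C : finType) (e : rel T) (L : T -> {set C}) :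
  simple_graph e ->
  connected_graph e ->
  (forall u : T, deg e u + 1 <= #|L u|) ->
  (exists v w : T, [/\ e v w, ~~ (L v \subset L w) & connected_minus e v]) ->
  forall alpha beta : T -> C,
    Lcolouring e L alpha -> Lcolouring e L beta ->
    unfrozen e L alpha -> unfrozen e L beta ->
    reconf e L alpha beta.
Proof.
move=> [esy eirr] conn hdeg [v [w [evw nsub cm]]] al be aL bL aU bU.
case/subsetPn: nsub => c cv cw.
have MlT : forall f x, Ml e L f setT x = L x.
  move=> f x; rewrite /Ml; apply/setP => d; rewrite !inE.
  have -> : nb e x :\: setT = set0 by apply/setP => y; rewrite !inE.
  by rewrite imset0 inE.
have [h [p [Hp H2 H3]]] := hp_exists v esy.
have P1 : forall f, Lcolouring e L f -> unfrozen e L f ->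
    exists g, [/\ reconf e L f g, g v = c & Lcolouring e L g].
  move=> f fL [x xU].
  have := @reach T C e L esy eirr hdeg v w c evw #|[set: T]| setT f h p (leqnn _) fL
    (in_setT v) (in_setT w).
  case=> //.
  - move=> y _ yv; have [c1 c2 c3] := Hp y (conn v y) yv; split=> //.
  - by move=> y _; apply: H2; apply: conn.
  - by move=> y _; apply: H3.
  - by move=> y _; rewrite MlT setIT; apply: hdeg.
  - by rewrite MlT.
  - by rewrite MlT.
  - by exists x.
  move=> g [Rg gv]; exists g; split=> //; exact: LC_rc Rg fL.
have [a1 [Ra a1v a1L]] := P1 al aL aU.
have [b1 [Rb b1v b1L]] := P1 be bL bU.
pose e' := [rel a b | [&& e a b, a != v & b != v]].
have e'sym : symmetric e'.
  by move=> a b; rewrite /e' /= esy; case: (e b a); rewrite //= andbC.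
have [h' [p' [Hp' _ _]]] := hp_exists w e'sym.
have wv : w != v by rewrite eq_sym; apply: e_neq evw.
have Rab : reconf e L a1 b1.
  apply: (@slack_conn T C e L esy eirr #|[set: T] :\ v| (setT :\ v) w h' p' a1 b1
            (leqnn _)) => //.
  - by rewrite in_setD1 wv in_setT.
  - move=> x; rewrite in_setD1 => /andP[xv _] xw.
    have [c1 /and3P[c2 c3 c4] c5] := Hp' x (cm w x wv xv) xw.
    by split=> //; rewrite in_setD1 c4 in_setT.
  - move=> x; rewrite in_setD1 in_setT andbT negbK => /eqP ->; by rewrite a1v b1v.
  - move=> x; rewrite in_setD1 in_setT andbT => xv.
    have := nbS_del e x (in_setT v); rewrite setIT => Enb.
    have hx : #|nb e x| + 1 <= #|L x| := hdeg x.
    case exv: (e x v).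
    + have sub : L x :\ c \subset Ml e L a1 (setT :\ v) x.
        apply/subsetP => d; rewrite !inE => /andP[dc dL]; rewrite dL andbT.
        apply/imsetP => -[y]; rewrite !inE => /andP[/nandP[/negbNE/eqP ->|//] _] E.
        by rewrite E a1v eqxx in dc.
      have c1 := subset_leq_card sub.
      have c2 := cardsD1 c (L x).
      case: (x =P w) => [Ex|/eqP xw].
        subst x; move: c2; rewrite (negbTE cw) => c2; move: c2 => /= c2.
        rewrite exv in Enb; lia.
      rewrite exv in Enb; move: Enb => /= Enb; have := leq_b1 (c \in L x); lia.
    + have -> : Ml e L a1 (setT :\ v) x = L x.
        rewrite /Ml; apply/setP => d; rewrite !inE.
        have -> : nb e x :\: (setT :\ v) = set0.
          apply/setP => y; rewrite !inE; case: (y =P v) => [->|]; first by rewrite exv.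
          by [].
        by rewrite imset0 inE.
      have xw : x != w by apply: contraFneq exv => ->; rewrite esy.
      rewrite (negbTE xw); move: Enb; rewrite /= addn0 => Enb; lia.
apply: RCt Ra (RCt Rab (reconf_sym _)).
exact: Rb.
Qed.
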